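(* Assume $\mathcal N''(s)\le0$ for $s\in[0,1]$. Let $0\le c<1$ and $\Lambda\in\mathbb C$ with $\operatorname{Re}\Lambda>0$. Let $r_0$ solve $r_0'=r_0\mathcal N(r_0^2)$, $r_0(0)=\frac12$, and set $\mathcal N_0=\mathcal N(r_0^2)$, $\mathcal N_p=\mathcal N'(r_0^2)r_0^2$, $F=\mathcal N_0+\mathcal N_p$ and $f=2c\mathcal N_p$ (functions of $X\in\mathbb R$). If $V\in L^2(\mathbb R)$ satisfies $$V_{XX}=(F^2-F_X)V+\Lambda(\Lambda-f)V,$$ then $V\equiv0$.
   Context: Nonlinearity: $\mathcal N:[0,\infty)\to\mathbb R$ is smooth, $\mathcal N'(s)<0$ for $s>0$, $\mathcal N(0)=1$, $\mathcal N(1)=0$, $\lim_{s\to\infty}\mathcal N(s)\in[-\infty,0)$. The function $r_0$ increases from $0$ at $X=-\infty$ to $1$ at $X=+\infty$. *)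

(* Defs.v *)
From Stdlib Require Import Reals.
From Coquelicot Require Import Coquelicot.
Open Scope R_scope.

(* Smoothness on [0,oo) is
   rendered as smoothness on all of R (any smooth function on [0,oo)
   extends smoothly to R, and values on (-oo,0) are never used). *)
Definition admissible_nonlinearity (N : R -> R) : Prop :=
  (forall (n : nat) (s : R), ex_derive_n N n s) /\
  (forall s : R, 0 < s -> Derive N s < 0) /\
  N 0 = 1 /\ N 1 = 0 /\
  (exists l : Rbar, is_lim N p_infty l /\ Rbar_lt l 0).

Definition N0 (N r0 : R -> R) (X : R) : R := N (r0 X ^ 2).
Definition Np (N r0 : R -> R) (X : R) : R := Derive N (r0 X ^ 2) * r0 X ^ 2.
Definition Ffun (N r0 : R -> R) (X : R) : R := N0 N r0 X + Np N r0 X.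
Definition ffun (N r0 : R -> R) (c X : R) : R := 2 * c * Np N r0 X.

Definition L2R (V : R -> C) : Prop :=
  ex_RInt_gen (fun X => (Cmod (V X)) ^ 2)
    (Rbar_locally m_infty) (Rbar_locally p_infty).

(* Main.v *)
Require Import Defs.
From Stdlib Require Import Reals.
From Coquelicot Require Import Coquelicot.
From Stdlib Require Import Lra Psatz.
Open Scope R_scope.

Lemma der_fst (V : R -> C) x l : is_derive V x l -> is_derive (fun t => fst (V t)) x (fst l).
Proof.
intros H. unfold is_derive in *.
pose proof (filterdiff_comp' V (fun t : R*R => fst t) x _ _ H (filterdiff_linear _ is_linear_fst)).
simpl in H0. exact H0.
Qed.
Lemma der_snd (V : R -> C) x l : is_derive V x l -> is_derive (fun t => snd (V t)) x (snd l).
Proof.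
intros H. unfold is_derive in *.
pose proof (filterdiff_comp' V (fun t : R*R => snd t) x _ _ H (filterdiff_linear _ is_linear_snd)).
simpl in H0. exact H0.
Qed.

Lemma mvt_lb (g dg : R -> R) m a b : a <= b ->
  (forall x, a <= x <= b -> is_derive g x (dg x)) ->
  (forall x, a <= x <= b -> m <= dg x) -> m * (b - a) <= g b - g a.
Proof.
intros Hab Hd Hm.
destruct (MVT_gen g a b dg) as [c [Hc E]].
- intros x Hx. rewrite Rmin_left in Hx by lra. rewrite Rmax_right in Hx by lra.
  apply Hd; lra.
- intros x Hx. rewrite Rmin_left in Hx by lra. rewrite Rmax_right in Hx by lra.
  apply continuity_pt_filterlim. apply (@ex_derive_continuous R_AbsRing R_NormedModule). eexists; apply Hd; lra.
- rewrite Rmin_left in Hc by lra. rewrite Rmax_right in Hc by lra.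
  rewrite E. specialize (Hm c Hc). nra.
Qed.

Lemma cs l1 l2 g1 g2 : (l1*g1 + l2*g2)^2 <= (l1^2+l2^2)*(g1^2+g2^2).
Proof.
replace ((l1^2+l2^2)*(g1^2+g2^2)) with ((l1*g1 + l2*g2)^2 + (l1*g2 - l2*g1)^2) by ring.
pose proof (pow2_ge_0 (l1*g2 - l2*g1)). lra.
Qed.

Lemma core (v1 v2 p1 p2 q1 q2 F Fd f : R -> R) (l1 l2 S : R) :
 (forall t, is_derive v1 t (p1 t)) -> (forall t, is_derive v2 t (p2 t)) ->
 (forall t, is_derive p1 t (q1 t)) -> (forall t, is_derive p2 t (q2 t)) ->
 (forall t, is_derive F t (Fd t)) ->
 (forall t, q1 t = (F t ^ 2 - Fd t) * v1 t + (l1*(l1 - f t) - l2*l2) * v1 t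
                   - (l1*l2 + l2*(l1 - f t)) * v2 t) ->
 (forall t, q2 t = (F t ^ 2 - Fd t) * v2 t + (l1*(l1 - f t) - l2*l2) * v2 t
                   + (l1*l2 + l2*(l1 - f t)) * v1 t) ->
 (forall t, f t <= 0) -> 0 < l1 ->
 (forall a b, a <= b -> RInt (fun s => v1 s ^ 2 + v2 s ^ 2) a b <= S) ->
 forall t, v1 t = 0 /\ v2 t = 0.
Proof.
intros Dv1 Dv2 Dp1 Dp2 DF Eq1 Eq2 Hf Hl1 HS.
set (h := fun t => l1 * (v1 t * (p1 t + F t * v1 t) + v2 t * (p2 t + F t * v2 t))
          + l2 * (v1 t * (p2 t + F t * v2 t) - v2 t * (p1 t + F t * v1 t))).
set (dh := fun t => l1 * ((p1 t + F t * v1 t)^2 + (p2 t + F t * v2 t)^2)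
          + (l1^2 + l2^2) * (l1 - f t) * (v1 t ^ 2 + v2 t ^ 2)).
assert (Hdh : forall t, is_derive h t (dh t)).
{ intros t. unfold h.
  auto_derive.
  - repeat split; eexists; eauto.
  - assert (E1 : Derive (fun x => v1 x) t = p1 t) by (apply is_derive_unique; apply Dv1).
    assert (E2 : Derive (fun x => v2 x) t = p2 t) by (apply is_derive_unique; apply Dv2).
    assert (E3 : Derive (fun x => p1 x) t = q1 t) by (apply is_derive_unique; apply Dp1).
    assert (E4 : Derive (fun x => p2 x) t = q2 t) by (apply is_derive_unique; apply Dp2).
    assert (E5 : Derive (fun x => F x) t = Fd t) by (apply is_derive_unique; apply DF).
    rewrite E1, E2, E3, E4, E5, Eq1, Eq2. unfold dh. ring.
  }
set (fV := fun s => v1 s ^ 2 + v2 s ^ 2).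
assert (Hdh0 : forall t, l1 * ((p1 t + F t * v1 t)^2 + (p2 t + F t * v2 t)^2)
          + (l1^2 + l2^2) * l1 * fV t <= dh t).
{ intros t. unfold dh, fV. specialize (Hf t).
  assert (0 <= (l1^2 + l2^2) * (v1 t ^ 2 + v2 t ^ 2)) by nra.
  nra. }
assert (Hdhp : forall t, 0 <= dh t).
{ intros t. specialize (Hdh0 t). unfold fV in Hdh0.
  assert (0 <= (p1 t + F t * v1 t)^2 + (p2 t + F t * v2 t)^2) by (pose proof (pow2_ge_0 (p1 t + F t * v1 t)); pose proof (pow2_ge_0 (p2 t + F t * v2 t)); lra).
  assert (0 <= v1 t ^ 2 + v2 t ^ 2) by nra.
  assert (0 <= l1^2 + l2^2) by nra.
  assert (0 <= (l1^2 + l2^2) * l1) by nra.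
  assert (0 <= (l1^2 + l2^2) * l1 * (v1 t ^ 2 + v2 t ^ 2)) by nra.
  nra. }
assert (Hkey : forall t, l1 * h t ^ 2 <= (l1^2+l2^2) * fV t * dh t).
{ intros t. specialize (Hdh0 t).
  set (w1 := p1 t + F t * v1 t) in *. set (w2 := p2 t + F t * v2 t) in *.
  assert (HC : h t ^ 2 <= (l1^2+l2^2) * (fV t * (w1^2 + w2^2))).
  { replace (fV t * (w1^2+w2^2)) with ((v1 t*w1 + v2 t*w2)^2 + (v1 t*w2 - v2 t*w1)^2)
      by (unfold fV; ring).
    unfold h. apply cs. }
  assert (0 <= fV t) by (unfold fV; pose proof (pow2_ge_0 (v1 t)); pose proof (pow2_ge_0 (v2 t)); lra).
  assert (0 <= l1^2+l2^2) by (pose proof (pow2_ge_0 l1); pose proof (pow2_ge_0 l2); lra).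
  assert (0 <= (l1^2+l2^2) * fV t) by (apply Rmult_le_pos; auto).
  assert (0 <= (l1^2+l2^2)*l1*fV t) by (rewrite Rmult_assoc, (Rmult_comm l1), <- Rmult_assoc; apply Rmult_le_pos; lra).
  assert ((l1^2+l2^2) * fV t * (l1 * (w1^2+w2^2)) <= (l1^2+l2^2) * fV t * dh t).
  { apply Rmult_le_compat_l; auto. lra. }
  apply Rmult_le_compat_l with (r := l1) in HC; [|lra].
  eapply Rle_trans; [exact HC|]. eapply Rle_trans; [|exact H3]. right; ring. }
assert (Hmono : forall x y, x <= y -> h x <= h y).
{ intros x y Hxy. pose proof (mvt_lb h dh 0 x y Hxy (fun z _ => Hdh z) (fun z _ => Hdhp z)). lra. }
assert (HfVd : forall t, is_derive fV t (2 * v1 t * p1 t + 2 * v2 t * p2 t)).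
{ intros t. unfold fV. auto_derive.
  - repeat split; eexists; eauto.
  - assert (E1 : Derive (fun x => v1 x) t = p1 t) by (apply is_derive_unique; apply Dv1).
    assert (E2 : Derive (fun x => v2 x) t = p2 t) by (apply is_derive_unique; apply Dv2).
    rewrite E1, E2. ring. }
assert (HfVc : forall t, continuous fV t).
{ intros t. apply (@ex_derive_continuous R_AbsRing R_NormedModule). eexists; apply HfVd. }
set (Q := fun t => RInt fV 0 t).
assert (HQd : forall t, is_derive Q t (fV t)).
{ intros t. apply is_derive_RInt with (a := 0).
  - exists (mkposreal 1 Rlt_0_1). intros b _. unfold Q. apply RInt_correct.
    apply ex_RInt_continuous. intros; apply HfVc.
  - apply HfVc. }
assert (HQS : forall a b, a <= b -> Q b - Q a <= S).
{ intros a b Hab. unfold Q.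
  rewrite <- (RInt_Chasles fV 0 a b).
  - unfold plus; simpl. specialize (HS a b Hab). fold fV in HS. lra.
  - apply ex_RInt_continuous. intros; apply HfVc.
  - apply ex_RInt_continuous. intros; apply HfVc. }
set (c0 := l1 / (l1^2 + l2^2)).
assert (HL : 0 < l1^2 + l2^2) by (pose proof (pow2_ge_0 l2); assert (0 < l1^2) by (apply pow_lt; lra); lra).
assert (Hc0 : 0 < c0) by (unfold c0; apply Rdiv_lt_0_compat; lra).
set (m := Rmin 1 c0).
assert (Hm : 0 < m) by (unfold m; apply Rmin_pos; lra).
assert (Hpt : forall t, h t <> 0 -> m <= fV t + dh t / h t ^ 2).
{ intros t Ht. specialize (Hkey t). specialize (Hdhp t).
  assert (Hh2 : 0 < h t ^ 2) by (apply pow2_gt_0; auto).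
  set (y := dh t / h t ^ 2).
  assert (Hy : 0 <= y) by (unfold y; apply Rdiv_le_0_compat; lra).
  assert (Hxy : c0 <= fV t * y).
  { unfold c0, y. apply (Rmult_le_reg_r (h t ^ 2)); auto.
    apply (Rmult_le_reg_l (l1^2+l2^2)); auto.
    field_simplify; try lra; try nra. }
  assert (0 <= fV t) by (unfold fV; pose proof (pow2_ge_0 (v1 t)); pose proof (pow2_ge_0 (v2 t)); lra).
  unfold m. destruct (Rle_lt_dec 1 (fV t)).
  - pose proof (Rmin_l 1 c0). lra.
  - pose proof (Rmin_r 1 c0). assert (fV t * y <= y) by nra. lra. }
set (G := fun t => Q t - / h t).
assert (HG : forall x, h x <> 0 -> is_derive G x (fV x + dh x / h x ^ 2)).
{ intros x Hx.
  assert (D : is_derive G x (minus (fV x) (- dh x / h x ^ 2))).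
  { unfold G. apply (@is_derive_minus R_AbsRing R_NormedModule); [apply HQd|]. apply is_derive_inv; auto. }
  replace (fV x + dh x / h x ^ 2) with (minus (fV x) (- dh x / h x ^ 2)); auto.
  unfold minus, plus, opp; simpl. field. auto. }
assert (HS0 : 0 <= S) by (pose proof (HQS 0 0 (Rle_refl 0)); lra).
assert (H0 : forall a, h a = 0).
{ intros a. destruct (Rtotal_order (h a) 0) as [Hn|[Hz|Hp]]; auto; exfalso.
  - assert (Hi : / h a < 0) by (apply Rinv_lt_0_compat; auto).
    set (b := a - (S - / h a) / m - 1).
    assert (Hq : 0 <= (S - / h a) / m) by (apply Rdiv_le_0_compat; lra).
    assert (Hb : b <= a) by (unfold b; lra).
    assert (Hneg : forall x, b <= x <= a -> h x < 0).
    { intros x Hx. pose proof (Hmono x a (proj2 Hx)). lra. }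
    pose proof (mvt_lb G (fun x => fV x + dh x / h x ^ 2) m b a Hb
      (fun x Hx => HG x (Rlt_not_eq _ _ (Hneg x Hx)))
      (fun x Hx => Hpt x (Rlt_not_eq _ _ (Hneg x Hx)))) as M.
    unfold G in M. pose proof (HQS b a Hb).
    assert (/ h b < 0) by (apply Rinv_lt_0_compat; apply Hneg; lra).
    assert (E : m * (a - b) = S - / h a + m) by (unfold b; field; lra).
    lra.
  - assert (Hi : 0 < / h a) by (apply Rinv_0_lt_compat; auto).
    set (b := a + (S + / h a) / m + 1).
    assert (Hq : 0 <= (S + / h a) / m) by (apply Rdiv_le_0_compat; lra).
    assert (Hb : a <= b) by (unfold b; lra).
    assert (Hpos : forall x, a <= x <= b -> 0 < h x).
    { intros x Hx. pose proof (Hmono a x (proj1 Hx)). lra. }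
    pose proof (mvt_lb G (fun x => fV x + dh x / h x ^ 2) m a b Hb
      (fun x Hx => HG x (Rgt_not_eq _ _ (Hpos x Hx)))
      (fun x Hx => Hpt x (Rgt_not_eq _ _ (Hpos x Hx)))) as M.
    unfold G in M. pose proof (HQS a b Hb).
    assert (0 < / h b) by (apply Rinv_0_lt_compat; apply Hpos; lra).
    assert (E : m * (b - a) = S + / h a + m) by (unfold b; field; lra).
    lra. }
intros t.
assert (Hz : dh t = 0).
{ assert (D0 : is_derive h t 0).
  { apply is_derive_ext with (f := fun _ => 0). intros; rewrite H0; auto. apply (@is_derive_const R_AbsRing R_NormedModule). }
  rewrite <- (is_derive_unique _ _ _ (Hdh t)). apply is_derive_unique; auto. }
specialize (Hdh0 t). rewrite Hz in Hdh0. unfold fV in Hdh0.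
pose proof (pow2_ge_0 (p1 t + F t * v1 t)). pose proof (pow2_ge_0 (p2 t + F t * v2 t)).
pose proof (pow2_ge_0 (v1 t)). pose proof (pow2_ge_0 (v2 t)).
assert (0 <= l1 * ((p1 t + F t * v1 t) ^ 2 + (p2 t + F t * v2 t) ^ 2)) by (apply Rmult_le_pos; lra).
assert (Hv : (l1^2+l2^2) * l1 * (v1 t ^ 2 + v2 t ^ 2) <= 0) by lra.
assert (Hv2 : v1 t ^ 2 + v2 t ^ 2 <= 0).
{ destruct (Rle_lt_dec (v1 t ^ 2 + v2 t ^ 2) 0); auto.
  assert (0 < (l1^2+l2^2) * l1 * (v1 t ^ 2 + v2 t ^ 2)) by
    (apply Rmult_lt_0_compat; auto; apply Rmult_lt_0_compat; auto). lra. }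
split; (apply Rsqr_0_uniq; unfold Rsqr; simpl in *; lra).
Qed.
Lemma exd_sq (a b : R -> R) t : ex_derive a t -> ex_derive b t -> ex_derive (fun s => a s ^ 2 + b s ^ 2) t.
Proof. intros. auto_derive. tauto. Qed.

Theorem lemma8p9 (N r0 : R -> R) (c : R) (Lam : C) (V V' V'' : R -> C)
  (HN : admissible_nonlinearity N)
  (HN2 : forall s : R, 0 <= s <= 1 -> Derive_n N 2 s <= 0)
  (Hc : 0 <= c < 1)
  (HLam : 0 < Re Lam)
  (Hr0 : forall X : R, is_derive r0 X (r0 X * N (r0 X ^ 2)))
  (Hr00 : r0 0 = 1 / 2)
  (HV' : forall X : R, is_derive V X (V' X))
  (HV'' : forall X : R, is_derive V' X (V'' X))
  (Heq : forall X : R,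
     V'' X = (RtoC (Ffun N r0 X ^ 2 - Derive (Ffun N r0) X) * V X
              + Lam * (Lam - RtoC (ffun N r0 c X)) * V X)%C)
  (HL2 : L2R V) :
  forall X : R, V X = RtoC 0.
Proof.
destruct HN as [Hsm [Hneg _]].
assert (DF : forall t, is_derive (Ffun N r0) t (Derive (Ffun N r0) t)).
{ intros t. apply Derive_correct. unfold Ffun, Defs.N0, Np.
  auto_derive. repeat split.
  - apply (Hsm 1%nat).
  - eexists; apply Hr0.
  - apply (Hsm 2%nat).
  - eexists; apply Hr0.
  - eexists; apply Hr0. }
assert (Hf : forall t, ffun N r0 c t <= 0).
{ intros t. unfold ffun, Np.
  assert (Hs : 0 <= r0 t ^ 2) by apply pow2_ge_0.
  destruct (Rle_lt_or_eq_dec _ _ Hs) as [Hp|Hz].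
  - specialize (Hneg _ Hp). assert (Derive N (r0 t ^ 2) * r0 t ^ 2 <= 0) by nra.
    nra.
  - rewrite <- Hz. lra. }
assert (HS : exists S, forall a b, a <= b -> RInt (fun s => fst (V s) ^ 2 + snd (V s) ^ 2) a b <= S).
{ destruct HL2 as [l Hl].
  set (fV := fun s => fst (V s) ^ 2 + snd (V s) ^ 2).
  assert (HCm : forall t, Cmod (V t) ^ 2 = fV t).
  { intros t. unfold Cmod, fV. apply pow2_sqrt.
    pose proof (pow2_ge_0 (fst (V t))). pose proof (pow2_ge_0 (snd (V t))). lra. }
  assert (Hcont : forall t, continuous fV t).
  { intros t. apply (@ex_derive_continuous R_AbsRing R_NormedModule). unfold fV.
    apply (exd_sq (fun s => fst (V s)) (fun s => snd (V s))); eexists;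
      [apply der_fst; apply HV' | apply der_snd; apply HV']. }
  assert (Hex : forall a b, ex_RInt fV a b).
  { intros a b. apply (@ex_RInt_continuous R_CompleteNormedModule). intros; apply Hcont. }
  assert (Hpos : forall a b, a <= b -> 0 <= RInt fV a b).
  { intros a b Hab. apply RInt_ge_0; auto. intros x _. unfold fV.
    pose proof (pow2_ge_0 (fst (V x))). pose proof (pow2_ge_0 (snd (V x))). lra. }
  unfold is_RInt_gen, filterlimi, filter_le, filtermapi in Hl.
  destruct (Hl (ball l 1) (locally_ball l (mkposreal 1 Rlt_0_1))) as [P Q HP HQ HPQ].
  simpl in HP, HQ. destruct HP as [M1 HM1]. destruct HQ as [M2 HM2].
  exists (l + 1). intros a b Hab. fold fV.
  set (u := Rmin a M1 - 1). set (v := Rmax b M2 + 1).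
  assert (Hu : u < M1) by (unfold u; pose proof (Rmin_r a M1); lra).
  assert (Hv : M2 < v) by (unfold v; pose proof (Rmax_r b M2); lra).
  assert (Hua : u <= a) by (unfold u; pose proof (Rmin_l a M1); lra).
  assert (Hbv : b <= v) by (unfold v; pose proof (Rmax_l b M2); lra).
  destruct (HPQ u v (HM1 u Hu) (HM2 v Hv)) as [y [Hy Hb]]. simpl in Hy.
  assert (Hy' : is_RInt fV u v y).
  { apply is_RInt_ext with (f := fun X => Cmod (V X) ^ 2); auto. }
  apply (@is_RInt_unique R_CompleteNormedModule) in Hy'.
  assert (Hball : Rabs (y - l) < 1).
  { unfold ball in Hb; simpl in Hb; unfold AbsRing_ball, abs, minus, plus, opp in Hb; simpl in Hb. exact Hb. }
  pose proof (RInt_Chasles fV u a v (Hex _ _) (Hex _ _)) as C1.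
  pose proof (RInt_Chasles fV a b v (Hex _ _) (Hex _ _)) as C2.
  unfold plus in C1, C2; simpl in C1, C2.
  pose proof (Hpos u a Hua). pose proof (Hpos b v Hbv).
  pose proof (Rabs_def2 _ _ Hball). lra. }
destruct HS as [S HS].
intros X.
destruct (core (fun t => fst (V t)) (fun t => snd (V t)) (fun t => fst (V' t)) (fun t => snd (V' t))
  (fun t => fst (V'' t)) (fun t => snd (V'' t)) (Ffun N r0) (Derive (Ffun N r0))
  (fun t => ffun N r0 c t) (fst Lam) (snd Lam) S) with (t := X) as [E1 E2].
- intros t; apply der_fst; auto.
- intros t; apply der_snd; auto.
- intros t; apply der_fst; auto.
- intros t; apply der_snd; auto.
- exact DF.
- intros t; rewrite (Heq t). simpl. ring.
- intros t; rewrite (Heq t). simpl. ring.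
- exact Hf.
- exact HLam.
- exact HS.
- simpl in E1, E2. destruct (V X) as [a b]. simpl in *. rewrite E1, E2. reflexivity.
Qed.
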